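(* Let $d = 2$ and assume $\varphi$ is twice continuously differentiable. For $X \in \mathcal{M}$, the eigenvalues of the Riemannian Hessian of $f$ at $X$ (a self-adjoint operator on the $n$-dimensional space $\mathrm{T}_X\mathcal{M}$) are equal to the eigenvalues of $-L(M)$, where $M$ has entries $m_{ij} = w_{ij}\, h(x_i^\top x_j)$ with $h(t) = t\varphi'(t) - (1-t^2)\varphi''(t)$. Moreover, $X$ is a critical point of $f$ with negative semidefinite Riemannian Hessian if and only if $$X\,\mathrm{ddiag}(X^\top X A) = XA \quad\text{and}\quad \mathrm{ddiag}(X^\top X A) - A \odot X^\top X \succeq L(K),$$ where $A = W \odot \varphi'(X^\top X)$ and $K = W \odot \varphi''(X^\top X) \odot \big(\mathbf{1}\mathbf{1}^\top - (X^\top X)^{\odot 2}\big)$.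
   Context: $\mathcal{M} = (\mathbb{S}^{1})^n = \{X\in\mathbb{R}^{2\times n} : \text{columns } x_i \text{ unit norm}\}$, a Riemannian submanifold of $\mathbb{R}^{2\times n}$ with the Frobenius metric. $W$ is symmetric with nonnegative entries, $f(X) = \frac12\sum_{i,j} w_{ij}\varphi(x_i^\top x_j)$; $\varphi,\varphi',\varphi''$ act entrywise on matrices. For a symmetric $M \in \mathbb{R}^{n\times n}$, $L(M) = \mathrm{diag}(M\mathbf{1}) - M$ (graph Laplacian), where $\mathrm{diag}(v)$ is the diagonal matrix with diagonal $v$ and $\mathbf{1}$ is the all-ones vector. $\odot$ is the entrywise product, $(\cdot)^{\odot 2}$ entrywise squaring, $\mathrm{ddiag}$ zeroes off-diagonal entries, $\succeq$ is the Loewner order. *)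

(* Defs.v *)
From HB Require Import structures.
From mathcomp Require Import all_boot all_order all_algebra.
From mathcomp Require Import all_classical all_reals all_analysis.
Set Implicit Arguments. Unset Strict Implicit. Unset Printing Implicit Defensive.
Import Order.TTheory GRing.Theory Num.Theory numFieldNormedType.Exports.
Local Open Scope ring_scope.

Section Defs.
Variables (R : realType) (n : nat).

Definition onM (X : 'M[R]_(2, n)) : Prop :=
  forall i : 'I_n, \sum_(k < 2) X k i ^+ 2 = 1.

Definition frob (A B : 'M[R]_(2, n)) : R :=
  \sum_(k < 2) \sum_(i < n) A k i * B k i.

Definition tangent (X U : 'M[R]_(2, n)) : Prop :=
  forall i : 'I_n, \sum_(k < 2) X k i * U k i = 0.

Definition fcost (phi : R -> R) (W : 'M[R]_n) (Y : 'M[R]_(2, n)) : R :=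
  2^-1 * \sum_(i < n) \sum_(j < n) W i j * phi ((Y^T *m Y) i j).

Definition egrad (F : 'M[R]_(2, n) -> R) (Y : 'M[R]_(2, n)) : 'M[R]_(2, n) :=
  \matrix_(k, i) derive1 (fun t : R => F (Y + t *: delta_mx k i)) 0.

(* orthogonal projection onto T_Y M (for Y in M): Z - Y ddiag(Y^T Z);
   the formula is also used off M as a smooth extension *)
Definition proj (Y Z : 'M[R]_(2, n)) : 'M[R]_(2, n) :=
  \matrix_(k, i) (Z k i - (\sum_(l < 2) Y l i * Z l i) * Y k i).

Definition rgrad (F : 'M[R]_(2, n) -> R) (X : 'M[R]_(2, n)) : 'M[R]_(2, n) :=
  proj X (egrad F X).

(* Riemannian Hessian of a Riemannian submanifold of a Euclidean space:
   Hess f(X)[U] = Proj_X (D Gbar(X)[U]) where Gbar(Y) = Proj_Y(grad fbar(Y))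
   is a smooth extension of the Riemannian gradient. *)
Definition rhess (F : 'M[R]_(2, n) -> R) (X U : 'M[R]_(2, n)) : 'M[R]_(2, n) :=
  proj X (\matrix_(k, i) derive1 (fun t : R => rgrad F (X + t *: U) k i) 0).

Definition hadamard (m p : nat) (A B : 'M[R]_(m, p)) : 'M[R]_(m, p) :=
  \matrix_(i, j) (A i j * B i j).

Definition entrywise (m p : nat) (g : R -> R) (A : 'M[R]_(m, p)) : 'M[R]_(m, p) :=
  \matrix_(i, j) g (A i j).

Definition ddiag (A : 'M[R]_n) : 'M[R]_n := diag_mx (\row_i A i i).

Definition laplacian (M : 'M[R]_n) : 'M[R]_n :=
  diag_mx (\row_i \sum_(j < n) M i j) - M.

Definition psd (A : 'M[R]_n) : Prop :=
  forall v : 'cV[R]_n, 0 <= (v^T *m A *m v) 0 0.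
Definition loewner_ge (P Q : 'M[R]_n) : Prop := psd (P - Q).

End Defs.

Definition C2 (R : realType) (phi : R -> R) : Prop :=
  (forall x : R, derivable phi x 1) /\
  (forall x : R, derivable (derive1 phi) x 1) /\
  continuous (derive1 (derive1 phi)).

(* Main.v *)
Require Import Defs.
From HB Require Import structures.
From mathcomp Require Import all_boot all_order all_algebra.
From mathcomp Require Import all_classical all_reals all_analysis.
From mathcomp Require Import ring lra.
Import Order.TTheory GRing.Theory Num.Theory.
Set Implicit Arguments. Unset Strict Implicit. Unset Printing Implicit Defensive.
Local Open Scope ring_scope.

Section Aux.
Variable R : realType.

Lemma isd_comp (g f : R -> R) (df : R) :
  is_derive (0:R) 1 f df -> derivable g (f 0) 1 ->
  is_derive (0:R) 1 (fun t => g (f t)) (derive1 g (f 0) * df).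
Proof.
move=> [df1 dv] dg; apply: DeriveDef.
  apply/derivable1_diffP; apply: (@differentiable_comp _ _ _ _ f g).
  exact/derivable1_diffP. exact/derivable1_diffP.
by rewrite -derive1E (derive1_comp df1 dg) [derive1 f 0]derive1E dv.
Qed.

Lemma isd_mul (f g : R -> R) (df dg : R) :
  is_derive (0:R) 1 f df -> is_derive (0:R) 1 g dg ->
  is_derive (0:R) 1 (fun t => f t * g t) (f 0 * dg + g 0 * df).
Proof. by move=> H1 H2; have := is_deriveM H1 H2. Qed.

Lemma isd_add (f g : R -> R) (df dg : R) :
  is_derive (0:R) 1 f df -> is_derive (0:R) 1 g dg ->
  is_derive (0:R) 1 (fun t => f t + g t) (df + dg).
Proof. by move=> H1 H2; have := is_deriveD H1 H2. Qed.

Lemma isd_sub (f g : R -> R) (df dg : R) :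
  is_derive (0:R) 1 f df -> is_derive (0:R) 1 g dg ->
  is_derive (0:R) 1 (fun t => f t - g t) (df - dg).
Proof. by move=> H1 H2; have := is_deriveB H1 H2. Qed.

Lemma isd_sum m (F : 'I_m -> R -> R) (dF : 'I_m -> R) :
  (forall i, is_derive (0:R) 1 (F i) (dF i)) ->
  is_derive (0:R) 1 (fun t => \sum_(i < m) F i t) (\sum_(i < m) dF i).
Proof.
move=> H; have := is_derive_sum H.
suff -> : (\sum_(i < m) F i) = (fun t => \sum_(i < m) F i t) by [].
by apply: funext => t; elim/big_rec2: _ => //= i y ? _ <-.
Qed.

Lemma isd_cst (a : R) : is_derive (0:R) 1 (fun _ => a) 0.
Proof. exact: is_derive_cst. Qed.

Lemma isd_id : is_derive (0:R) 1 (fun t => t) 1.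
Proof. exact: is_derive_id. Qed.

Lemma isd_aff (a b : R) : is_derive (0:R) 1 (fun t => a + t * b) b.
Proof.
have H := isd_add (isd_cst a) (isd_mul isd_id (isd_cst b)).
apply: is_derive_eq H _; ring.
Qed.


Lemma isd_d1 (f : R -> R) df : is_derive (0:R) 1 f df -> derive1 f 0 = df.
Proof. by move=> H; rewrite derive1E derive_val. Qed.

End Aux.

Definition i0 : 'I_2 := ord0.
Definition i1 : 'I_2 := ord_max.

Lemma ord2 (k : 'I_2) : k = i0 \/ k = i1.
Proof. by case: k => [[|[|//]] Hk]; [left|right]; apply: val_inj. Qed.

Section Main.
Variables (R : realType) (n : nat) (W : 'M[R]_n) (phi : R -> R).
Hypothesis HW : W^T = W.
Hypothesis hd1 : forall x, derivable phi x 1.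
Hypothesis hd2 : forall x, derivable (derive1 phi) x 1.
Local Notation p1 := (derive1 phi).
Local Notation p2 := (derive1 (derive1 phi)).

Lemma sum2 (F : 'I_2 -> R) : \sum_(k < 2) F k = F i0 + F i1.
Proof. by rewrite big_ord_recl big_ord1; congr (_ + F _); apply: val_inj. Qed.

Lemma Wsym i j : W i j = W j i.
Proof. by rewrite -[in LHS]HW mxE. Qed.

Lemma gramE (Y : 'M[R]_(2,n)) a b : (Y^T *m Y) a b = Y i0 a * Y i0 b + Y i1 a * Y i1 b.
Proof. by rewrite mxE sum2 !mxE. Qed.

Lemma gramC (Y : 'M[R]_(2,n)) a b : (Y^T *m Y) a b = (Y^T *m Y) b a.
Proof. by rewrite !gramE [Y i0 a * _]mulrC [Y i1 a * _]mulrC. Qed.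

Definition Am (Y : 'M[R]_(2,n)) : 'M[R]_n := \matrix_(a,b) (W a b * p1 ((Y^T *m Y) a b)).

Lemma isd_gram (Y D : 'M[R]_(2,n)) a b :
  is_derive (0:R) 1 (fun t => ((Y + t *: D)^T *m (Y + t *: D)) a b)
    (D i0 a * Y i0 b + Y i0 a * D i0 b + (D i1 a * Y i1 b + Y i1 a * D i1 b)).
Proof.
have -> : (fun t => ((Y + t *: D)^T *m (Y + t *: D)) a b) =
  (fun t => (Y i0 a + t * D i0 a) * (Y i0 b + t * D i0 b) + (Y i1 a + t * D i1 a) * (Y i1 b + t * D i1 b)).
  by apply: funext => t; rewrite gramE !mxE.
apply: (is_derive_eq (isd_add (isd_mul (isd_aff _ _) (isd_aff _ _)) (isd_mul (isd_aff _ _) (isd_aff _ _)))).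
rewrite !mul0r !addr0; ring.
Qed.

Lemma sum_delta_l (F : 'I_n -> 'I_n -> R) j :
  \sum_a \sum_b ((a == j)%:R * F a b) = \sum_b F j b.
Proof.
rewrite (bigD1 j) //= [X in _ + X]big1 ?addr0.
  by apply: eq_bigr => b _; rewrite eqxx mul1r.
by move=> a /negbTE ne; apply: big1 => b _; rewrite ne mul0r.
Qed.

Lemma sum_delta_r (F : 'I_n -> 'I_n -> R) j :
  \sum_a \sum_b ((b == j)%:R * F a b) = \sum_a F a j.
Proof.
apply: eq_bigr => a _; rewrite (bigD1 j) //= [X in _ + X]big1 ?addr0 ?eqxx ?mul1r //.
by move=> b /negbTE ne; rewrite ne mul0r.
Qed.

Lemma delta_sum (Y : 'M[R]_(2,n)) k i a b :
  @delta_mx R 2 n k i i0 a * Y i0 b + @delta_mx R 2 n k i i1 a * Y i1 b = (a == i)%:R * Y k b.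
Proof.
rewrite !mxE; case: (ord2 k) => ->; case: (eqVneq a i) => _ /=;
  rewrite ?andbT ?andbF ?eqxx /=; ring.
Qed.

Lemma egradE (Y : 'M[R]_(2,n)) : egrad (fcost phi W) Y = Y *m Am Y.
Proof.
apply/matrixP => k i; rewrite !mxE.
apply: isd_d1; rewrite /fcost.
apply: is_derive_eq.
  apply: isd_mul.
  apply: isd_sum => a; apply: isd_sum => b.
  apply: isd_mul.
  apply: isd_comp; first exact: isd_gram.
  exact: hd1.
rewrite /= !scaler0 !mulr0 !addr0 scale0r addr0.
set G := Y^T *m Y.
transitivity (2^-1 * (\sum_a \sum_b ((a == i)%:R * (W a b * p1 (G a b) * Y k b))
   + \sum_a \sum_b ((b == i)%:R * (W a b * p1 (G a b) * Y k a)))).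
  congr (_ * _); rewrite -big_split; apply: eq_bigr => a _.
  rewrite -big_split; apply: eq_bigr => b _ /=; rewrite mulr0 addr0.
  have E1 := delta_sum Y k i a b.
  have E2 := delta_sum Y k i b a.
  have -> : delta_mx k i i0 a * Y i0 b + Y i0 a * delta_mx k i i0 b +
    (delta_mx k i i1 a * Y i1 b + Y i1 a * delta_mx k i i1 b) =
    (delta_mx k i i0 a * Y i0 b + delta_mx k i i1 a * Y i1 b) +
    (delta_mx k i i0 b * Y i0 a + delta_mx k i i1 b * Y i1 a) by ring.
  rewrite E1 E2; ring.
rewrite sum_delta_l sum_delta_r.
have -> : \sum_a (W a i * p1 (G a i) * Y k a) = \sum_b (W i b * p1 (G i b) * Y k b).
  by apply: eq_bigr => a _; rewrite Wsym /G gramC.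
set S := \sum_b _.
have -> : 2^-1 * (S + S) = S by field.
by apply: eq_bigr => b _; rewrite [Am _ _ _]mxE (Wsym b i) /G (gramC _ b i); ring.
Qed.


Lemma rgradE (Y : 'M[R]_(2,n)) k i : rgrad (fcost phi W) Y k i =
  (Y *m Am Y) k i - (\sum_l Y l i * (Y *m Am Y) l i) * Y k i.
Proof. by rewrite /rgrad egradE mxE. Qed.

Variables (X U : 'M[R]_(2,n)).

Definition G := X^T *m X.
Definition A := Am X.
Definition E := X *m A.
Definition dG a b := U i0 a * X i0 b + X i0 a * U i0 b + (U i1 a * X i1 b + X i1 a * U i1 b).
Definition dA a b := W a b * (p2 (G a b) * dG a b).
Definition dE k i := \sum_b (X k b * dA b i + A b i * U k b).
Definition cc i := \sum_l X l i * E l i.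
Definition dc i := \sum_l (X l i * dE l i + E l i * U l i).
Definition dR k i := dE k i - (cc i * U k i + X k i * dc i).

Lemma XU0 : X + 0 *: U = X.
Proof. by rewrite scale0r addr0. Qed.

Lemma isd_Y k a : is_derive (0:R) 1 (fun t => (X + t *: U) k a) (U k a).
Proof.
have -> : (fun t => (X + t *: U) k a) = (fun t => X k a + t * U k a).
  by apply: funext => t; rewrite !mxE.
exact: isd_aff.
Qed.

Lemma isd_A a b : is_derive (0:R) 1 (fun t => Am (X + t *: U) a b) (dA a b).
Proof.
have -> : (fun t => Am (X + t *: U) a b) =
  (fun t => W a b * p1 (((X + t *: U)^T *m (X + t *: U)) a b)).
  by apply: funext => t; rewrite mxE.
apply: is_derive_eq.
  apply: isd_mul; try exact: isd_cst.
  apply: isd_comp; first exact: isd_gram.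
  exact: hd2.
by rewrite /= XU0 mulr0 addr0.
Qed.

Lemma isd_E k i : is_derive (0:R) 1 (fun t => ((X + t *: U) *m Am (X + t *: U)) k i) (dE k i).
Proof.
have -> : (fun t => ((X + t *: U) *m Am (X + t *: U)) k i) =
  (fun t => \sum_b (X + t *: U) k b * Am (X + t *: U) b i).
  by apply: funext => t; rewrite mxE.
apply: is_derive_eq.
  apply: isd_sum => b; apply: isd_mul; [exact: isd_Y | exact: isd_A].
by rewrite /dE; apply: eq_bigr => b _; rewrite XU0.
Qed.

Lemma rhessE : rhess (fcost phi W) X U = Defs.proj X (\matrix_(k, i) dR k i).
Proof.
rewrite /rhess; congr Defs.proj; apply/matrixP => k i; rewrite mxE [RHS]mxE.
have -> : (fun t => rgrad (fcost phi W) (X + t *: U) k i) =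
  (fun t => ((X + t *: U) *m Am (X + t *: U)) k i -
     (\sum_l (X + t *: U) l i * ((X + t *: U) *m Am (X + t *: U)) l i) * (X + t *: U) k i).
  by apply: funext => t; rewrite rgradE.
apply: isd_d1; apply: is_derive_eq.
  apply: isd_sub; first exact: isd_E.
  apply: isd_mul; last exact: isd_Y.
  apply: isd_sum => l; apply: isd_mul; [exact: isd_Y | exact: isd_E].
rewrite /dR /= XU0 /cc /dc /E /A; congr (_ - _); rewrite addrC; congr (_ + _).
Qed.

End Main.

Lemma key (R : realType) (x0 x1 y0 y1 u0 u1 z0 z1 v0 v1 w q1 q2 : R) :
 x0^+2 + x1^+2 = 1 -> y0^+2+y1^+2 = 1 -> x0*u0 + x1*u1 = 0 -> y0*z0 + y1*z1 = 0 ->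
 x0*v0 + x1*v1 = 0 ->
 v0 * (y0 * (w * (q2 * (z0*x0 + y0*u0 + (z1*x1 + y1*u1)))) + w*q1 * z0)
 + v1 * (y1 * (w*(q2*(z0*x0 + y0*u0 + (z1*x1 + y1*u1)))) + w*q1*z1)
 - (x0*y0 + x1*y1) * (w*q1) * (v0*u0 + v1*u1)
 = (-x1*v0 + x0*v1) * (w * ((x0*y0 + x1*y1)*q1 - (1 - (x0*y0 + x1*y1)^+2)*q2)
    * ((-y1*z0 + y0*z1) - (-x1*u0 + x0*u1))).
Proof.
move=> Hx Hy Hu Hz Hv.
have sub : forall s0 s1 : R, x0*s0 + x1*s1 = 0 ->
    s0 = - (-x1*s0 + x0*s1) * x1 /\ s1 = (-x1*s0 + x0*s1) * x0.
  move=> s0 s1 Hs; split.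
    transitivity (s0*(x0^+2+x1^+2) - x0*(x0*s0+x1*s1)); first by rewrite Hx Hs; ring.
    ring.
  transitivity (s1*(x0^+2+x1^+2) - x1*(x0*s0+x1*s1)); first by rewrite Hx Hs; ring.
  ring.
have subz : z0 = - (-y1*z0 + y0*z1) * y1 /\ z1 = (-y1*z0 + y0*z1) * y0.
  split.
    transitivity (z0*(y0^+2+y1^+2) - y0*(y0*z0+y1*z1)); first by rewrite Hy Hz; ring.
    ring.
  transitivity (z1*(y0^+2+y1^+2) - y1*(y0*z0+y1*z1)); first by rewrite Hy Hz; ring.
  ring.
case: (sub _ _ Hu) => Hu0 Hu1; case: (sub _ _ Hv) => Hv0 Hv1; case: subz => Hz0 Hz1.
move: Hu0 Hu1 Hv0 Hv1 Hz0 Hz1.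
move: (-x1*u0 + x0*u1) (-x1*v0 + x0*v1) (-y1*z0 + y0*z1) => a b c Hu0 Hu1 Hv0 Hv1 Hz0 Hz1.
rewrite Hu0 Hu1 Hv0 Hv1 Hz0 Hz1.
set g := x0*y0 + x1*y1.
transitivity (b*w*(g*q1*c + q2*((x0^+2+x1^+2)*(y0^+2+y1^+2) - g^+2)*(a-c) - g*q1*a*(x0^+2+x1^+2))).
  rewrite /g; ring.
rewrite Hx Hy; ring.
Qed.
Section S3.
Variables (R : realType) (n : nat) (W : 'M[R]_n) (phi : R -> R).
Hypothesis HW : W^T = W.
Hypothesis hd1 : forall x, derivable phi x 1.
Hypothesis hd2 : forall x, derivable (derive1 phi) x 1.
Local Notation p1 := (derive1 phi).
Local Notation p2 := (derive1 (derive1 phi)).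
Variable X : 'M[R]_(2,n).

Definition alpha (U : 'M[R]_(2,n)) i := - X i1 i * U i0 i + X i0 i * U i1 i.
Definition hh t := t * p1 t - (1 - t^+2) * p2 t.
Definition Mm i b := W i b * hh ((X^T *m X) i b).

Lemma frobE (V Z : 'M[R]_(2,n)) : frob V Z = \sum_i (V i0 i * Z i0 i + V i1 i * Z i1 i).
Proof. by rewrite /frob sum2 big_split. Qed.

Lemma tangentE (V : 'M[R]_(2,n)) : tangent X V -> forall i, X i0 i * V i0 i + X i1 i * V i1 i = 0.
Proof. by move=> H i; rewrite -(H i) sum2. Qed.

Lemma onME : onM X -> forall i, X i0 i ^+ 2 + X i1 i ^+ 2 = 1.
Proof. by move=> H i; rewrite -(H i) sum2. Qed.

Lemma frob_proj (V Z : 'M[R]_(2,n)) : tangent X V -> frob V (Defs.proj X Z) = frob V Z.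
Proof.
move/tangentE=> H; rewrite !frobE; apply: eq_bigr => i _; rewrite !mxE.
set s := \sum_l _.
transitivity (V i0 i * Z i0 i + V i1 i * Z i1 i - s * (X i0 i * V i0 i + X i1 i * V i1 i)); first ring.
by rewrite H mulr0 subr0.
Qed.


Lemma sum_comb (F0 F1 H0 H1 : 'I_n -> R) a0 a1 c0 c1 S :
  a0 * \sum_b F0 b + a1 * \sum_b F1 b - (c0 * \sum_b H0 b + c1 * \sum_b H1 b) * S
  = \sum_b (a0 * F0 b + a1 * F1 b - (c0 * H0 b + c1 * H1 b) * S).
Proof.
rewrite sumrB !big_split /= -!mulr_sumr; congr (_ - _).
by rewrite -mulr_suml big_split /= -!mulr_sumr.
Qed.

Lemma hess_form (U V : 'M[R]_(2,n)) : onM X -> tangent X U -> tangent X V ->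
  frob V (rhess (fcost phi W) X U) =
  \sum_i (alpha V i * \sum_b (Mm i b * (alpha U b - alpha U i))).
Proof.
move=> /onME HX /tangentE HU /tangentE HV.
rewrite (rhessE HW hd1 hd2) frob_proj; last by move=> i; rewrite sum2 HV.
rewrite frobE; apply: eq_bigr => i _; rewrite !mxE.
transitivity (V i0 i * dE W phi X U i0 i + V i1 i * dE W phi X U i1 i
  - cc W phi X i * (V i0 i * U i0 i + V i1 i * U i1 i)
  - dc W phi X U i * (X i0 i * V i0 i + X i1 i * V i1 i)).
  rewrite /dR; ring.
rewrite HV mulr0 subr0 /cc sum2 /E !mxE /dE sum_comb mulr_sumr.
apply: eq_bigr => b _.
rewrite /dA /A /Am mxE /G (Wsym HW b i) (gramC X b i) /Mm /hh /alpha /dG gramE.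
eapply etrans; last (apply: key); [ring | exact: HX | exact: HX | exact: HU | exact: HU | exact: HV].
Qed.

End S3.

Lemma char_poly_orth (R : comNzRingType) n (P N : 'M[R]_n) :
  P^T *m P = 1%:M -> char_poly (P^T *m N *m P) = char_poly N.
Proof.
move=> HP.
set Pc := map_mx (@polyC R) P.
have HPc : Pc^T *m Pc = 1%:M by rewrite /Pc map_trmx -map_mxM HP map_mx1.
have E : char_poly_mx (P^T *m N *m P) = Pc^T *m char_poly_mx N *m Pc.
  rewrite /char_poly_mx mulmxBr mulmxBl mul_mx_scalar -scalemxAl HPc scalemx1.
  by rewrite !map_mxM /Pc map_trmx.
by rewrite /char_poly E !det_mulmx mulrAC -det_mulmx HPc det1 mul1r.
Qed.

Lemma sum_delta1 (R : realType) n (F : 'I_n -> R) a :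
  \sum_b ((a == b)%:R * F b) = F a.
Proof.
rewrite (bigD1 a) //= eqxx mul1r big1 ?addr0 // => b nb.
by rewrite eq_sym (negbTE nb) mul0r.
Qed.

Lemma lap_row (R : realType) n (M : 'M[R]_n) (v : 'I_n -> R) a :
  \sum_b ((- laplacian M) a b * v b) = \sum_b (M a b * (v b - v a)).
Proof.
transitivity (\sum_b (M a b * v b) - \sum_b ((a == b)%:R * ((\sum_j M a j) * v b))).
  rewrite -sumrB; apply: eq_bigr => b _; rewrite !mxE.
  by case: (a == b); rewrite ?mulr1n ?mulr0n; ring.
rewrite sum_delta1 mulr_suml -sumrB; apply: eq_bigr => b _; ring.
Qed.

Lemma bilinM (R : realType) n m (P Q : 'M[R]_(n, m)) (N : 'M[R]_n) i j :
  (P^T *m N *m Q) i j = \sum_a (P a i * \sum_b (N a b * Q b j)).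
Proof.
rewrite mxE; transitivity (\sum_b \sum_a (P a i * (N a b * Q b j))).
  apply: eq_bigr => b _; rewrite mxE mulr_suml; apply: eq_bigr => a _; rewrite mxE; ring.
by rewrite exchange_big; apply: eq_bigr => a _; rewrite mulr_sumr.
Qed.

Lemma frob_tan (R : realType) n (X U V : 'M[R]_(2,n)) :
  onM X -> tangent X U -> tangent X V ->
  frob U V = \sum_a (alpha X U a * alpha X V a).
Proof.
move=> /onME HX /tangentE HU /tangentE HV; rewrite frobE; apply: eq_bigr => a _.
rewrite /alpha.
transitivity ((U i0 a * V i0 a + U i1 a * V i1 a) * (X i0 a ^+ 2 + X i1 a ^+ 2)).
  by rewrite HX mulr1.
transitivity ((- X i1 a * U i0 a + X i0 a * U i1 a) * (- X i1 a * V i0 a + X i0 a * V i1 a)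
  + (X i0 a * U i0 a + X i1 a * U i1 a) * (X i0 a * V i0 a + X i1 a * V i1 a)).
  ring.
by rewrite HU mul0r addr0.
Qed.

Lemma i10 : (i1 == i0) = false. Proof. by []. Qed.

Theorem mainTheorem10 (R : realType) (n : nat) (W : 'M[R]_n) (phi : R -> R)
    (X : 'M[R]_(2, n)) :
  W^T = W -> (forall i j, 0 <= W i j) -> C2 phi -> onM X ->
  let f := fcost phi W in
  let G := X^T *m X in
  let h := fun t : R => t * derive1 phi t - (1 - t ^+ 2) * derive1 (derive1 phi) t in
  let M := hadamard W (entrywise h G) in
  let A := hadamard W (entrywise (derive1 phi) G) in
  let K := hadamard (hadamard W (entrywise (derive1 (derive1 phi)) G))
                    (const_mx 1 - hadamard G G) in
  (forall U : 'I_n -> 'M[R]_(2, n),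
     (forall i, tangent X (U i)) ->
     (forall i j, frob (U i) (U j) = (i == j)%:R) ->
     char_poly (\matrix_(i, j) frob (U i) (rhess f X (U j)))
     = char_poly (- laplacian M)) /\
  ((rgrad f X = 0 /\ (forall U, tangent X U -> frob U (rhess f X U) <= 0)) <->
   (X *m ddiag (G *m A) = X *m A /\
    loewner_ge (ddiag (G *m A) - hadamard A G) (laplacian K))).
Proof.
move=> HW _ [hd1 [hd2 _]] HXm f G h M A K.
have MmE : forall i b, Mm W phi X i b = M i b.
  move=> i b; rewrite /Mm /M /hadamard /entrywise /G !mxE /hh /h.
  by [].
have form : forall U V, tangent X U -> tangent X V -> frob V (rhess f X U) =
    \sum_i (alpha X V i * \sum_b ((- laplacian M) i b * alpha X U b)).
  move=> U V HU HV; rewrite /f (hess_form HW hd1 hd2) //.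
  apply: eq_bigr => i _; rewrite lap_row; congr (_ * _).
  by apply: eq_bigr => b _; rewrite MmE.
split.
  move=> U HU HO.
  set P := \matrix_(a, j) alpha X (U j) a.
  have HP : P^T *m P = 1%:M.
    apply/matrixP => i j; rewrite mxE [RHS]mxE -HO (frob_tan HXm) //.
    by apply: eq_bigr => a _; rewrite !mxE.
  have -> : \matrix_(i, j) frob (U i) (rhess f X (U j)) = P^T *m (- laplacian M) *m P.
    apply/matrixP => i j; rewrite mxE bilinM form //; apply: eq_bigr => a _.
    rewrite [P a i]mxE; congr (_ * _); apply: eq_bigr => b _; rewrite [P b j]mxE.
    done.
  exact: char_poly_orth.
have AmE : Am W phi X = A by apply/matrixP => a b; rewrite /A /hadamard /entrywise !mxE.
have gradE : rgrad f X = X *m A - X *m ddiag (G *m A).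
  apply/matrixP => k i; rewrite /f (rgradE HW hd1) AmE [RHS]mxE [X in _ = _ + X]mxE.
  congr (_ - _); rewrite /ddiag mul_mx_diag !mxE mulrC; congr (_ * _).
  have -> : \sum_j G i j * A j i = (G *m A) i i by rewrite mxE.
  by rewrite /G -mulmxA [RHS]mxE; apply: eq_bigr => l _; rewrite [X^T _ _]mxE.
have ME : forall i j, M i j = A i j * G i j - K i j.
  by move=> i j; rewrite /M /A /K /hadamard /entrywise !mxE /h; ring.
have Asym : forall i j, A i j = A j i.
  move=> i j; rewrite /A /hadamard /entrywise /G !mxE (Wsym HW i j).
  by rewrite (eq_bigr (fun k => X^T j k * X k i)) // => k _; rewrite !mxE mulrC.
have Gsym : forall i j, G i j = G j i by move=> i j; rewrite /G (gramC X i j).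
have LE : ddiag (G *m A) - hadamard A G - laplacian K = laplacian M.
  apply/matrixP => i j; rewrite /laplacian /ddiag !mxE.
  have S1 : \sum_b M i b = \sum_b (A i b * G i b) - \sum_b K i b.
    by rewrite -sumrB; apply: eq_bigr => b _; exact: ME.
  have S2 : \sum_b G i b * A b i = \sum_b (A i b * G i b).
    by apply: eq_bigr => b _; rewrite (Asym b i) mulrC.
  by rewrite S1 S2 /h; case: (i == j); rewrite ?mulr1n ?mulr0n; ring.
have HX := onME HXm.
have quad : forall (U : 'M[R]_(2,n)) (v : 'cV[R]_n), (forall i, alpha X U i = v i 0) ->
    \sum_i (alpha X U i * \sum_b ((- laplacian M) i b * alpha X U b)) =
    - (v^T *m laplacian M *m v) 0 0.
  move=> U v Hv; rewrite bilinM -sumrN; apply: eq_bigr => i _.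
  rewrite Hv -mulrN -sumrN; congr (_ * _); apply: eq_bigr => b _.
  by rewrite Hv mxE mulNr.
rewrite /loewner_ge LE gradE.
split => [[Hg Hh] | [Hg Hp]]; split.
- by apply/eqP; rewrite eq_sym -subr_eq0 Hg.
- move=> v.
  pose U : 'M[R]_(2,n) := \matrix_(k, i) (v i 0 * (if k == i0 then - X i1 i else X i0 i)).
  have HU : tangent X U by move=> i; rewrite sum2 !mxE eqxx i10 /=; ring.
  have aU : forall i, alpha X U i = v i 0.
    move=> i; rewrite /alpha !mxE eqxx i10 /=.
    transitivity (v i 0 * (X i0 i ^+ 2 + X i1 i ^+ 2)); first ring.
    by rewrite HX mulr1.
  by have := Hh U HU; rewrite form // (quad U v aU) oppr_le0.
- by rewrite Hg subrr.
- move=> U HU; rewrite form //.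
  pose a : 'cV[R]_n := \matrix_(i, j) alpha X U i.
  rewrite (quad U a) ?oppr_le0; first exact: Hp.
  by move=> i; rewrite mxE.
Qed.
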